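(* Let $\mathcal{X}=\{\mathbf{x}_1,\dots,\mathbf{x}_N\}\subset\mathbb{R}^d$ with $N\ge2$ and with pairwise distinct points, i.e. $\mathbf{x}_i\neq\mathbf{x}_j$ for $i\ne j$. Define the leave-one-out (LOO) total log-likelihood of the adaptive KDE model $$L_{\text{LOO}}(\sigma_1,\dots,\sigma_N)=\sum_{i=1}^N\log\sum_{j\neq i}\mathcal{N}(\mathbf{x}_i;\mathbf{x}_j,\sigma_j^2\mathbf{I}),\qquad \sigma\in(0,\infty)^N.$$ Then there exists $\varepsilon>0$, depending only on the dataset, such that every maximizer $\sigma^*\in(0,\infty)^N$ of $L_{\text{LOO}}$ satisfies $\sigma_j^*\ge\varepsilon$ for all $j=1,\dots,N$. In particular, no optimal solution of the LOO maximum log-likelihood problem exhibits data-copying (no bandwidth tends to $0^+$).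
   Context: $\mathcal{N}(\mathbf{x};\boldsymbol\mu,\sigma^2\mathbf{I})=(2\pi\sigma^2)^{-d/2}\exp\!\big(-\lVert\mathbf{x}-\boldsymbol\mu\rVert^2/(2\sigma^2)\big)$ denotes the isotropic Gaussian density on $\mathbb{R}^d$. ''Data-copying'' means that some bandwidth $\sigma_j\to0^+$. *)

(* Defs.v *)
From HB Require Import structures.
From mathcomp Require Import all_boot all_order all_algebra.
From mathcomp Require Import all_classical all_reals all_analysis.
Set Implicit Arguments. Unset Strict Implicit. Unset Printing Implicit Defensive.
Import Order.TTheory GRing.Theory Num.Theory.
Local Open Scope ring_scope.

Definition sqdist (R : realType) (d : nat) (x mu : 'I_d -> R) : R :=
  \sum_(k < d) (x k - mu k) ^+ 2.

Definition gauss (R : realType) (d : nat) (x mu : 'I_d -> R) (s : R) : R :=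
  ((Num.sqrt (2 * pi * s ^+ 2)) ^+ d)^-1 * expR (- sqdist x mu / (2 * s ^+ 2)).

Definition L_LOO (R : realType) (d N : nat) (X : 'I_N -> 'I_d -> R)
  (sigma : 'I_N -> R) : R :=
  \sum_(i < N) ln (\sum_(j < N | j != i) gauss (X i) (X j) (sigma j)).

(* Main.v *)
Set Warnings "-all".
Require Import Defs.
From HB Require Import structures.
From mathcomp Require Import all_boot all_order all_algebra.
From mathcomp Require Import all_classical all_reals all_analysis.
From mathcomp Require Import ring lra zify.
Import Order.TTheory GRing.Theory Num.Theory.
Local Open Scope ring_scope.
Set Implicit Arguments. Unset Strict Implicit.

Lemma key_ineq (R : realType) (d : nat) (u k : R) :
  1 < u -> d.+1%:R <= k -> u ^+ d < expR (k * (u ^+ 2 - 1)).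
Proof.
move=> u1 kd.
have u2 : 0 < u ^+ 2 - 1 by rewrite subr_gt0 exprn_egt1.
apply: (@lt_le_trans _ _ ((u ^+ 2) ^+ d.+1)).
  rewrite -exprM ltr_eXn2l //; lia.
apply: (@le_trans _ _ (expR (d.+1%:R * (u ^+ 2 - 1)))); last first.
  by rewrite ler_expR ler_pM2r.
rewrite expRM_natl lerXn2r ?nnegrE ?exprn_ge0 ?expR_ge0 //; first lra.
by have := expR_ge1Dx (u ^+ 2 - 1); rewrite addrC subrK.
Qed.

Lemma sqrt_form (R : realType) (s : R) : 0 < s ->
  Num.sqrt (2 * pi * s ^+ 2) = Num.sqrt (2 * pi) * s.
Proof.
move=> s0; rewrite sqrtrM ?sqrtr_sqr ?gtr0_norm //.
by rewrite mulr_ge0 // ltW // pi_gt0.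
Qed.

Lemma gauss_lt (R : realType) (d : nat) (x mu : 'I_d -> R) (a b : R) :
  0 < a -> a < b -> 2 * d.+1%:R * b ^+ 2 <= sqdist x mu ->
  gauss x mu a < gauss x mu b.
Proof.
move=> a0 ab hD.
have b0 : 0 < b by apply: lt_trans ab.
set D := sqdist x mu in hD *.
rewrite /gauss !sqrt_form // -/D.
set c := Num.sqrt (2 * pi).
have c0 : 0 < c by rewrite sqrtr_gt0 mulr_gt0 // pi_gt0.
set u := b / a.
have u1 : 1 < u by rewrite /u ltr_pdivlMr // mul1r.
set k := D / (2 * b ^+ 2).
have kd : d.+1%:R <= k.
  by rewrite /k ler_pdivlMr ?mulr_gt0 ?exprn_gt0 // mulrA (mulrC _ 2).
have K := @key_ineq R d u k u1 kd.
have eb : b = u * a by rewrite /u divfK // gt_eqF.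
have e1 : - D / (2 * b ^+ 2) = - k by rewrite /k mulNr.
have e2 : - D / (2 * a ^+ 2) = - k - k * (u ^+ 2 - 1).
  by rewrite /k eb; field; rewrite !gt_eqF // (lt_trans ltr01).
have -> : expR (- D / (2 * b ^+ 2)) = expR (- k) by rewrite e1.
have -> : expR (- D / (2 * a ^+ 2)) = expR (- k) / expR (k * (u ^+ 2 - 1)).
  by rewrite e2 expRB.
rewrite eb.
set G := expR (- k); set F := expR (k * (u ^+ 2 - 1)).
set P := (c * a) ^- d.
have G0 : 0 < G by rewrite expR_gt0.
have F0 : 0 < F by rewrite expR_gt0.
have ud : 0 < u ^+ d by rewrite exprn_gt0 // (lt_trans ltr01).
have P0 : 0 < P by rewrite invr_gt0 exprn_gt0 // mulr_gt0.
have -> : (c * (u * a)) ^- d = P * (u ^+ d)^-1.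
  by rewrite /P mulrCA exprMn invfM mulrC.
have -> : P * (G / F) = (P * G) * F^-1 by ring.
have -> : P * (u ^+ d)^-1 * G = (P * G) * (u ^+ d)^-1 by ring.
rewrite ltr_pM2l ?mulr_gt0 //.
by rewrite ltf_pV2 ?posrE.
Qed.

Lemma gauss_gt0 (R : realType) (d : nat) (x mu : 'I_d -> R) (s : R) :
  0 < s -> 0 < gauss x mu s.
Proof.
move=> s0; rewrite /gauss mulr_gt0 ?expR_gt0 // invr_gt0 exprn_gt0 //.
by rewrite sqrtr_gt0 !mulr_gt0 ?exprn_gt0 ?pi_gt0.
Qed.

Lemma fin_lb (R : realType) (T : finType) (P : pred T) (f : T -> R) :
  (forall x, P x -> 0 < f x) -> exists m : R, 0 < m /\ forall x, P x -> m <= f x.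
Proof.
move=> fpos.
suff [m [m0 hm]] : exists m : R, 0 < m /\ forall x, x \in enum T -> P x -> m <= f x.
  by exists m; split => // x; apply: hm; rewrite mem_enum.
elim: (enum T) => [|y s [m [m0 hm]]]; first by exists 1; split.
case Py: (P y).
  exists (Num.min m (f y)); split; first by rewrite lt_min m0 fpos.
  move=> x; rewrite inE => /orP [/eqP -> _|xs Px]; first by rewrite ge_min lexx orbT.
  by rewrite ge_min hm.
exists m; split => // x; rewrite inE => /orP [/eqP -> |]; first by rewrite Py.
exact: hm.
Qed.

Lemma sqdist_gt0 (R : realType) (d : nat) (x mu : 'I_d -> R) :
  x <> mu -> 0 < sqdist x mu.
Proof.
move=> xmu; rewrite lt_def sumr_ge0 ?andbT => [|k _]; last exact: sqr_ge0.
apply/eqP => /psumr_eq0P h; apply: xmu; apply: funext => k.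
have := h (fun i _ => sqr_ge0 _) k isT; move/eqP; rewrite sqrf_eq0 subr_eq0 => /eqP //.
Qed.

Unset Implicit Arguments.
Theorem theorem2 (R : realType) (d N : nat) (X : 'I_N -> 'I_d -> R) :
  (2 <= N)%N ->
  injective X ->
  exists eps : R, 0 < eps /\
    forall sigma : 'I_N -> R,
      (forall j, 0 < sigma j) ->
      (forall tau : 'I_N -> R, (forall j, 0 < tau j) ->
         L_LOO X tau <= L_LOO X sigma) ->
      forall j, eps <= sigma j.
Proof.
move=> N2 Xinj.
have [m [m0 hm]] := @fin_lb R ('I_N * 'I_N)%type (fun p : 'I_N * 'I_N => p.1 != p.2)
   (fun p => sqdist (X p.1) (X p.2))
   (fun p hp => sqdist_gt0 (fun e => negP hp (introT eqP (Xinj _ _ e)))).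
have hm' : forall i k, i != k -> m <= sqdist (X i) (X k).
  by move=> i k ik; exact: (hm (i, k)).
have c0 : 0 < 2 * d.+1%:R :> R by rewrite mulr_gt0.
set q := m / (2 * d.+1%:R).
have q0 : 0 < q by rewrite divr_gt0.
set eps := Num.min 1 q.
have e0 : 0 < eps by rewrite lt_min ltr01 q0.
have e2 : 2 * d.+1%:R * eps ^+ 2 <= m.
  rewrite -ler_pdivlMl // mulrC expr2.
  apply: (@le_trans _ _ (1 * q)); last by rewrite mul1r /q mulrC.
  by apply: ler_pM; rewrite ?(ltW e0) // /eps ge_min lexx ?orbT.
exists eps; split => // sigma spos smax j.
rewrite leNgt; apply/negP => sj.
pose tau := fun k => if k == j then eps else sigma k.
have tpos : forall k, 0 < tau k by move=> k; rewrite /tau; case: ifP.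
have := smax tau tpos; apply/negP; rewrite -ltNge.
have a0 : (0 < N)%N by apply: leq_trans N2.
pose o0 := Ordinal a0; pose o1 := Ordinal N2.
pose oth := fun i : 'I_N => if i == o0 then o1 else o0.
have othi : forall i, oth i != i.
  move=> i; rewrite /oth; case: ifP => [/eqP ->|/negbT]; last by rewrite eq_sym.
  by apply/eqP => /(congr1 val).
have term : forall i k, k != i ->
    gauss (X i) (X k) (sigma k) <= gauss (X i) (X k) (tau k).
  move=> i k ki; rewrite /tau; case: eqP => [ekj|]; last by [].
  rewrite ltW // ekj gauss_lt //; apply: le_trans e2 _; apply: hm'.
  by rewrite -ekj eq_sym.
have termj : forall i, j != i ->
    gauss (X i) (X j) (sigma j) < gauss (X i) (X j) (tau j).
  move=> i ji; rewrite /tau eqxx gauss_lt //; apply: le_trans e2 _; apply: hm'.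
  by rewrite eq_sym.
have Spos : forall (s : 'I_N -> R) i, (forall k, 0 < s k) ->
    0 < \sum_(k < N | k != i) gauss (X i) (X k) (s k).
  move=> s i hs; rewrite (bigD1 (oth i)) ?othi //=.
  by rewrite ltr_pwDl ?gauss_gt0 // sumr_ge0 // => k _; rewrite ltW ?gauss_gt0.
have Sle : forall i, \sum_(k < N | k != i) gauss (X i) (X k) (sigma k) <=
    \sum_(k < N | k != i) gauss (X i) (X k) (tau k).
  by move=> i; apply: ler_sum => k; exact: term.
rewrite /L_LOO (bigD1 (oth j)) //= [X in _ < X](bigD1 (oth j)) //=.
apply: ltr_leD.
  rewrite ltr_ln ?posrE ?Spos //.
  rewrite (bigD1 j) 1?eq_sym ?othi //= [X in _ < X](bigD1 j) 1?eq_sym ?othi //=.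
  apply: ltr_leD; first by apply: termj; rewrite eq_sym othi.
  by apply: ler_sum => k /andP [k1 _]; exact: term.
apply: ler_sum => i _.
by rewrite ler_ln ?posrE ?Spos.
Qed.
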